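(* Let $n\ge1$, $\mathcal{X}$ the simplex in $\mathbb{R}^{n+1}$, $\theta$ a kernel, $\Phi$ a Lipschitz continuous smooth function on an open neighborhood of $\mathcal{X}$, and $\eta\ge0$. Let $x(t)$ be an interior solution of the inertial dynamics (ID) that is defined for all $t\ge0$, and let $x^*\in\mathcal{X}$. Assume that for every $\delta>0$ and every $T>0$ there exists an interval $J$ of length at least $T$ such that $\max_\alpha|x_\alpha(t)-x^*_\alpha|<\delta$ for all $t\in J$. Then $$\frac{\partial\Phi}{\partial x_\alpha}(x^* )=\frac{\partial\Phi}{\partial x_\beta}(x^* )\quad\text{for all }\alpha,\beta\in\mathrm{supp}(x^* ).$$
   Context: $\mathcal{X}=\{x\in\mathbb{R}^{n+1}:x_\alpha\ge0,\sum_\alpha x_\alpha=1\}$ with relative interior $\mathcal{X}^\circ$; $\mathrm{supp}(x)=\{\alpha:x_\alpha>0\}$. A kernel is a $C^\infty$ function $\theta:[0,\infty)\to\mathbb{R}\cup\{+\infty\}$ with $\theta(x)<\infty$ for $x>0$, $\lim_{x\to0^+}\theta'(x)=-\infty$, $\theta''>0$, $\theta'''<0$ on $(0,\infty)$. With $\theta''_\alpha=\theta''(x_\alpha)$, $\theta'''_\alpha=\theta'''(x_\alpha)$, $\Theta''=(\sum_\beta1/\theta''_\beta)^{-1}$, $v_\alpha=\partial\Phi/\partial x_\alpha$, the inertial dynamics (ID) on $\mathcal{X}^\circ$ are $$\ddot x_\alpha=\frac{1}{\theta''_\alpha}\Big[v_\alpha-\sum_{\beta}\frac{\Theta''}{\theta''_\beta}v_\beta\Big]-\frac{1}{2\theta''_\alpha}\Big[\theta'''_\alpha\dot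 x_\alpha^2-\sum_\beta\frac{\Theta''}{\theta''_\beta}\theta'''_\beta\dot x_\beta^2\Big]-\eta\dot x_\alpha.$$ *)

(* Defs.v *)
From HB Require Import structures.
From mathcomp Require Import all_boot all_order all_algebra.
From mathcomp Require Import all_classical all_reals all_analysis.
Set Implicit Arguments. Unset Strict Implicit. Unset Printing Implicit Defensive.
Import Order.TTheory GRing.Theory Num.Theory.
Import numFieldNormedType.Exports.
Local Open Scope classical_set_scope.
Local Open Scope ring_scope.

Section Defs.
Variable R : realType.

Definition simplex (n : nat) (y : 'rV[R]_n.+1) : Prop :=
  (forall a, 0 <= y ord0 a) /\ \sum_a y ord0 a = 1.

Definition simplex_interior (n : nat) (y : 'rV[R]_n.+1) : Prop :=
  (forall a, 0 < y ord0 a) /\ \sum_a y ord0 a = 1.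

Definition supp_pt (n : nat) (y : 'rV[R]_n.+1) : set 'I_n.+1 := [set a | 0 < y ord0 a].

Definition evec (n : nat) (a : 'I_n.+1) : 'rV[R]_n.+1 := delta_mx ord0 a.

Definition pderiv (n : nat) (F : 'rV[R]_n.+1 -> R) (a : 'I_n.+1) (y : 'rV[R]_n.+1) : R :=
  'D_(evec a) F y.

Fixpoint Ck_on (n : nat) (k : nat) (U : set 'rV[R]_n.+1) (F : 'rV[R]_n.+1 -> R) : Prop :=
  match k with
  | 0%N => forall y, U y -> {for y, continuous F}
  | k'.+1 => (forall y, U y -> {for y, continuous F}) /\
             forall a, (forall y, U y -> derivable F y (evec a)) /\
                       Ck_on k' U (pderiv F a)
  end.

Definition Cinf_on (n : nat) (U : set 'rV[R]_n.+1) (F : 'rV[R]_n.+1 -> R) : Prop :=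
  forall k, Ck_on k U F.

Definition Lipschitz_on (n : nat) (U : set 'rV[R]_n.+1) (F : 'rV[R]_n.+1 -> R) : Prop :=
  exists L : R, forall y z, U y -> U z -> `|F y - F z| <= L * `|y - z|.

Definition is_kernel (theta : R -> R) : Prop :=
  (forall (k : nat) (x : R), 0 < x -> derivable (derive1n k theta) x 1) /\
  (derive1 theta x @[x --> 0^'+] --> -oo) /\
  (forall x : R, 0 < x -> 0 < derive1n 2 theta x) /\
  (forall x : R, 0 < x -> derive1n 3 theta x < 0).

Definition ID_rhs (n : nat) (theta : R -> R) (Phi : 'rV[R]_n.+1 -> R) (eta : R)
  (y : 'rV[R]_n.+1) (yd : 'I_n.+1 -> R) (a : 'I_n.+1) : R :=
  let th2 b := derive1n 2 theta (y ord0 b) in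
  let th3 b := derive1n 3 theta (y ord0 b) in
  let Th2 := (\sum_b (th2 b)^-1)^-1 in
  let v b := pderiv Phi b y in
  (th2 a)^-1 * (v a - \sum_b Th2 / th2 b * v b)
  - (2 * th2 a)^-1 * (th3 a * yd a ^+ 2 - \sum_b Th2 / th2 b * th3 b * yd b ^+ 2)
  - eta * yd a.

Definition ID_solution (n : nat) (theta : R -> R) (Phi : 'rV[R]_n.+1 -> R) (eta : R)
  (x : R -> 'rV[R]_n.+1) : Prop :=
  (forall t, 0 <= t -> simplex_interior (x t)) /\
  (forall a t, 0 <= t -> {for t, continuous (fun s => x s ord0 a)}) /\
  (forall a t, 0 < t ->
     derivable (fun s => x s ord0 a) t 1 /\
     derivable (derive1 (fun u => x u ord0 a)) t 1) /\
  (forall a t, 0 < t ->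
     derive1n 2 (fun u => x u ord0 a) t =
     ID_rhs theta Phi eta (x t) (fun b => derive1 (fun u => x u ord0 b) t) a).

End Defs.

(* Main.v *)
Require Import Defs.
From HB Require Import structures.
From mathcomp Require Import all_boot all_order all_algebra.
From mathcomp Require Import all_classical all_reals all_analysis.
From mathcomp Require Import ring lra.
Import Order.TTheory GRing.Theory Num.Theory.
Import numFieldNormedType.Exports.
Local Open Scope classical_set_scope.
Local Open Scope ring_scope.

Lemma alg (R : realType) (A a3 B b3 va vb S K Qa Qb dQa dQb eta k eps e V : R) :
 0 < A -> 0 < B -> a3 <= 0 -> b3 <= 0 -> 0 <= eps -> eps <= 1 -> `|k - A| <= eps * A ->
 - V <= S - K / 2 -> `|va| <= V -> `|vb| <= V -> 2 * e <= va - vb -> 4 * eps * V <= e ->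
 dQa = A^-1 * (va - S) - (2 * A)^-1 * (a3 * Qa ^+ 2 - K) - eta * Qa ->
 dQb = B^-1 * (vb - S) - (2 * B)^-1 * (b3 * Qb ^+ 2 - K) - eta * Qb ->
 e <= k * dQa - (1 + eps) * (B * dQb + Qb * (b3 * Qb))
      + eta * (k * Qa - (1 + eps) * (B * Qb)).
Proof.
move=> A0 B0 a30 b30 ep0 ep1 hk hl hva hvb hd he -> ->.
set l := S - K / 2.
have hl' : - V <= l by exact: hl.
set p := va - l.
set q := - (a3 * Qa ^+ 2) / 2.
have q0 : 0 <= q by rewrite /q; apply: divr_ge0 => //; rewrite oppr_ge0 mulr_le0_ge0 // sqr_ge0.
have EA : A^-1 * (va - S) - (2 * A)^-1 * (a3 * Qa ^+ 2 - K) - eta * Qa + eta * Qa = (p + q) / A.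
  by rewrite /p /q /l; field; rewrite gt_eqF.
have EB : B * (B^-1 * (vb - S) - (2 * B)^-1 * (b3 * Qb ^+ 2 - K) - eta * Qb) + Qb * (b3 * Qb)
      + eta * (B * Qb) = vb - l + b3 * Qb ^+ 2 / 2.
  by rewrite /l; field; rewrite gt_eqF.
have -> : k * (A^-1 * (va - S) - (2 * A)^-1 * (a3 * Qa ^+ 2 - K) - eta * Qa) -
    (1 + eps) * (B * (B^-1 * (vb - S) - (2 * B)^-1 * (b3 * Qb ^+ 2 - K) - eta * Qb) + Qb * (b3 * Qb)) +
    eta * (k * Qa - (1 + eps) * (B * Qb))
  = k * (A^-1 * (va - S) - (2 * A)^-1 * (a3 * Qa ^+ 2 - K) - eta * Qa + eta * Qa)
    - (1 + eps) * (B * (B^-1 * (vb - S) - (2 * B)^-1 * (b3 * Qb ^+ 2 - K) - eta * Qb) + Qb * (b3 * Qb)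
      + eta * (B * Qb)) by ring.
rewrite EA EB.
have hb : (1 + eps) * (vb - l + b3 * Qb ^+ 2 / 2) <= (1 + eps) * (vb - l).
  rewrite ler_wpM2l //; first lra.
  have : b3 * Qb ^+ 2 / 2 <= 0 by apply: mulr_le0_ge0 => //; apply: mulr_le0_ge0 => //; exact: sqr_ge0.
  lra.
set s := (k - A) / A.
have hs : `|s| <= eps by rewrite /s normrM normfV (gtr0_norm A0) ler_pdivrMr.
have Ek : k * ((p + q) / A) = (p + q) + s * (p + q) by rewrite /s; field; rewrite gt_eqF.
have hsp : - (eps * (`|p| + q)) <= s * (p + q).
  rewrite lerNl; apply: le_trans (ler_norm _) _; rewrite normrN normrM.
  apply: ler_pM => //; apply: le_trans (ler_normD _ _) _; rewrite (ger0_norm q0) //.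
have hp : `|p| <= 3 * V + l.
  rewrite /p; apply: le_trans (ler_normD _ _) _; rewrite normrN.
  have : `|l| <= l + 2 * V.
    case: (lerP 0 l) => hl0; first by rewrite ger0_norm //; move: (le_trans (normr_ge0 va) hva); lra.
    by rewrite ltr0_norm //; lra.
  lra.
have : eps * `|p| <= eps * (3 * V + l) by rewrite ler_wpM2l.
have : eps * q <= q by rewrite -{2}(mul1r q) ler_wpM2r.
have : eps * vb <= eps * V by rewrite ler_wpM2l //; move: hvb; rewrite ler_norml => /andP[].
have Ep : p = va - l by [].
rewrite Ek. move: hsp hb he hd Ep. clearbody p q s l. move=> *. lra.
Qed.
Lemma mvt_lb (R : realType) (f df : R -> R) (a b s t m : R) :
  a < s -> s < t -> t < b ->
  (forall x, a < x < b -> is_derive x 1 f (df x)) ->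
  (forall x, s < x < t -> m <= df x) -> m * (t - s) <= f t - f s.
Proof.
move=> as0 st tb hd hm.
have h1 : forall x, x \in `]s, t[ -> is_derive x 1 f (df x).
  move=> x; rewrite in_itv /= => /andP[x1 x2]; apply: hd.
  by rewrite (lt_trans as0 x1) (lt_trans x2 tb).
have h2 : {within `[s, t], continuous f}.
  apply: derivable_within_continuous => x; rewrite in_itv /= => /andP[x1 x2].
  apply: ex_derive; apply: hd.
  by rewrite (lt_le_trans as0 x1) (le_lt_trans x2 tb).
have [c] := MVT st h1 h2.
rewrite in_itv /= => /andP[c1 c2] ->.
apply: ler_wpM2r; first by rewrite subr_ge0 ltW.
by apply: hm; rewrite c1 c2.
Qed.

Lemma mvt_ub (R : realType) (f df : R -> R) (a b s t m : R) :
  a < s -> s < t -> t < b ->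
  (forall x, a < x < b -> is_derive x 1 f (df x)) ->
  (forall x, s < x < t -> df x <= m) -> f t - f s <= m * (t - s).
Proof.
move=> as0 st tb hd hm.
have h1 : forall x, x \in `]s, t[ -> is_derive x 1 f (df x).
  move=> x; rewrite in_itv /= => /andP[x1 x2]; apply: hd.
  by rewrite (lt_trans as0 x1) (lt_trans x2 tb).
have h2 : {within `[s, t], continuous f}.
  apply: derivable_within_continuous => x; rewrite in_itv /= => /andP[x1 x2].
  apply: ex_derive; apply: hd.
  by rewrite (lt_le_trans as0 x1) (le_lt_trans x2 tb).
have [c] := MVT st h1 h2.
rewrite in_itv /= => /andP[c1 c2] ->.
apply: ler_wpM2r; first by rewrite subr_ge0 ltW.
by apply: hm; rewrite c1 c2.
Qed.

Lemma is_derive_lin (R : realType) (f g : R -> R) (x df dg c : R) :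
  is_derive x 1 f df -> is_derive x 1 g dg ->
  is_derive x 1 (fun t => f t + c * g t) (df + c * dg).
Proof.
move=> hf hg.
have := is_deriveD hf (is_deriveZ c hg).
by [].
Qed.

Lemma growth (R : realType) (Y dY ddY : R -> R) (a b eta e M : R) :
  0 < e -> 0 <= eta -> a < b -> (forall t, a < t < b -> `|Y t| <= M) ->
  (forall t, a < t < b -> is_derive t 1 Y (dY t)) ->
  (forall t, a < t < b -> is_derive t 1 dY (ddY t)) ->
  (forall t, a < t < b -> e <= ddY t + eta * dY t) ->
  b - a <= 2 * ((eta * M + 1) / e + 2 * M + 1).
Proof.
move=> e0 eta0 ab hM hY hdY hW.
set W := fun t => dY t + eta * Y t.
have hWd : forall t, a < t < b -> is_derive t 1 W (ddY t + eta * dY t).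
  by move=> t ht; apply: is_derive_lin; [exact: hdY | exact: hY].
set m := (a + b) / 2.
have am : a < m by rewrite /m; lra.
have mb : m < b by rewrite /m; lra.
have M0 : 0 <= M by apply: le_trans (hM m _); rewrite ?am ?mb.
set L := (eta * M + 1) / e.
have L0 : 0 <= L by rewrite /L; apply: divr_ge0; [nra | lra].
have eL : e * L = eta * M + 1 by rewrite /L mulrC divfK // gt_eqF.
rewrite leNgt; apply/negP => hlong.
have hetaY : forall t, a < t < b -> `|eta * Y t| <= eta * M.
  by move=> t ht; rewrite normrM ger0_norm // ler_wpM2l // hM.
case: (lerP 0 (W m)) => hWm.
- set t1 := m + L. set t2 := m + L + (2 * M + 1).
  have at1 : a < t1 by rewrite /t1; lra.
  have t12 : t1 < t2 by rewrite /t2 /t1; lra.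
  have t2b : t2 < b by rewrite /t2 /m; lra.
  have hd1 : forall x, t1 < x < t2 -> 1 <= dY x.
    move=> x /andP[x1 x2].
    have hx : a < x < b by apply/andP; split; lra.
    have mx : m < x by rewrite /t1 in x1; lra.
    have := @mvt_lb _ W _ a b m x e am mx (lt_trans x2 t2b) hWd.
    have := hetaY x hx; rewrite ler_norml => /andP[_ h1].
    have : e * L <= e * (x - m) by rewrite ler_wpM2l ?ltW //; rewrite /t1 in x1; lra.
    move=> h3 h5.
    have {h5} h5 : e * (x - m) <= dY x + eta * Y x - (dY m + eta * Y m).
      apply: h5 => y /andP[y1 y2]; apply: hW; apply/andP; split; lra.
    have hWm' : 0 <= dY m + eta * Y m by exact: hWm.
    lra.
  have := @mvt_lb _ Y _ a b t1 t2 1 at1 t12 t2b hY hd1.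
  have ht1 : a < t1 < b by apply/andP; split; lra.
  have ht2 : a < t2 < b by apply/andP; split; lra.
  have := hM t1 ht1; have := hM t2 ht2.
  rewrite !ler_norml => /andP[h1 h2] /andP[h3 h4].
  rewrite /t2 /t1; lra.
- set t2 := m - L. set t1 := m - L - (2 * M + 1).
  have at1 : a < t1 by rewrite /t1 /m; lra.
  have t12 : t1 < t2 by rewrite /t2 /t1; lra.
  have t2b : t2 < b by rewrite /t2; lra.
  have hd1 : forall x, t1 < x < t2 -> dY x <= - 1.
    move=> x /andP[x1 x2].
    have hx : a < x < b by apply/andP; split; lra.
    have xm : x < m by rewrite /t2 in x2; lra.
    have := @mvt_lb _ W _ a b x m e (lt_trans at1 x1) xm mb hWd.
    have := hetaY x hx; rewrite ler_norml => /andP[h1 _].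
    have : e * L <= e * (m - x) by rewrite ler_wpM2l ?ltW //; rewrite /t2 in x2; lra.
    move=> h3 h5.
    have {h5} h5 : e * (m - x) <= dY m + eta * Y m - (dY x + eta * Y x).
      apply: h5 => y /andP[y1 y2]; apply: hW; apply/andP; split; lra.
    have hWm' : dY m + eta * Y m < 0 by exact: hWm.
    lra.
  have := @mvt_ub _ Y _ a b t1 t2 (-1) at1 t12 t2b hY hd1.
  have ht1 : a < t1 < b by apply/andP; split; lra.
  have ht2 : a < t2 < b by apply/andP; split; lra.
  have := hM t1 ht1; have := hM t2 ht2.
  rewrite !ler_norml => /andP[h1 h2] /andP[h3 h4].
  rewrite /t2 /t1; lra.
Qed.
Lemma lam_bound (R : realType) (n : nat) (h g v yd : 'I_n.+1 -> R) (V : R) :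
  (forall b, 0 < h b) -> (forall b, g b <= 0) -> (forall b, - V <= v b) ->
  - V <= \sum_b (\sum_c (h c)^-1)^-1 / h b * v b
         - (\sum_b (\sum_c (h c)^-1)^-1 / h b * g b * yd b ^+ 2) / 2.
Proof.
move=> hp gn vV.
set Th := (\sum_c (h c)^-1)^-1.
have s0 : 0 < \sum_c (h c)^-1.
  rewrite (bigD1 ord0) //=; apply: ltr_pwDl; first by rewrite invr_gt0.
  by apply: sumr_ge0 => i _; rewrite invr_ge0 ltW.
have Th0 : 0 < Th by rewrite /Th invr_gt0.
have hS : - V <= \sum_b Th / h b * v b.
  have -> : - V = \sum_b Th / h b * (- V).
    by rewrite -mulr_suml -mulr_sumr /Th mulVf ?gt_eqF // mul1r.
  apply: ler_sum => b _; apply: ler_wpM2l => //.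
  by apply: divr_ge0; rewrite ltW // invr_gt0.
have hK : \sum_b Th / h b * g b * yd b ^+ 2 <= 0.
  apply: sumr_le0 => b _; apply: mulr_le0_ge0; last exact: sqr_ge0.
  apply: mulr_ge0_le0 => //; apply: divr_ge0; last exact: ltW.
  by rewrite ltW.
lra.
Qed.

Lemma is_derive_lin2 (R : realType) (f g : R -> R) (x df dg c1 c2 : R) :
  is_derive x 1 f df -> is_derive x 1 g dg ->
  is_derive x 1 (fun t => c1 * f t - c2 * g t) (c1 * df - c2 * dg).
Proof.
move=> hf hg.
have := is_deriveB (is_deriveZ c1 hf) (is_deriveZ c2 hg).
by [].
Qed.

Lemma is_derive_prodcomp (R : realType) (f g q : R -> R) (x df dg dq : R) :
  is_derive (g x) 1 f df -> is_derive x 1 g dg -> is_derive x 1 q dq ->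
  is_derive x 1 (fun t => f (g t) * q t) (f (g x) * dq + q x * (df * dg)).
Proof.
move=> hf hg hq.
have h1 := is_derive1_comp hf hg.
have := is_deriveM h1 hq.
by [].
Qed.

Lemma is_derive_comp' (R : realType) (f g : R -> R) (x df dg : R) :
  is_derive (g x) 1 f df -> is_derive x 1 g dg ->
  is_derive x 1 (fun t => f (g t)) (df * dg).
Proof. move=> hf hg; exact: is_derive1_comp hf hg. Qed.

Arguments alg {R A a3 B b3 va vb S K Qa Qb dQa dQb eta k eps e V}.
Arguments lam_bound {R n h g v yd V}.
Arguments is_derive_lin2 {R f g x df dg} c1 c2.
Arguments is_derive_prodcomp {R f g q x df dg dq}.
Arguments is_derive_comp' {R f g x df dg}.

Lemma ar1 (R : realType) (k A eps : R) : 0 < k -> 0 <= eps -> eps <= 1 ->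
  `|A - k| < eps * k / 2 -> `|k - A| <= eps * A.
Proof.
move=> k0 e0 e1; rewrite ltr_norml => /andP[u1 u2].
have u3 : eps * k <= k by rewrite -{2}(mul1r k) ler_wpM2r // ltW.
have u5 : k / 2 <= A by lra.
have u4 : eps * (k / 2) <= eps * A by apply: ler_wpM2l.
rewrite distrC ler_norml; apply/andP; split; lra.
Qed.

Lemma ar2 (R : realType) (va vb pa pb e : R) : va - vb = 4 * e ->
  `|pa - va| < e -> `|pb - vb| < e -> 2 * e <= pa - pb.
Proof. by move=> h; rewrite !ltr_norml => /andP[u1 u2] /andP[u3 u4]; lra. Qed.

Lemma ar3 (R : realType) (p v e V : R) : `|p - v| < e -> `|v| + e <= V -> `|p| <= V.
Proof. move=> h1 h2; have := lerB_dist p v; lra. Qed.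

Lemma ballrV (R : realType) n (x y : 'rV[R]_n.+1) e : 0 < e -> (forall i, `|x ord0 i - y ord0 i| < e) -> ball x e y.
Proof.
move=> e0 H. split => // i j. rewrite (ord1 i). rewrite -ball_normE /ball_ /=. exact: H.
Qed.

Lemma main_lt (R : realType) (n : nat) (theta : R -> R)
  (Phi : 'rV[R]_n.+1 -> R) (U : set 'rV[R]_n.+1) (eta : R)
  (x : R -> 'rV[R]_n.+1) (xs : 'rV[R]_n.+1) al be :
  is_kernel theta -> (forall y, simplex y -> U y) ->
  Cinf_on U Phi -> 0 <= eta ->
  ID_solution theta Phi eta x ->
  simplex xs ->
  (forall delta T : R, 0 < delta -> 0 < T ->
     exists a b : R, 0 <= a /\ T <= b - a /\
       forall t, a < t < b -> forall al, `|x t ord0 al - xs ord0 al| < delta) ->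
  supp_pt xs al -> supp_pt xs be -> ~ (pderiv Phi be xs < pderiv Phi al xs).
Proof.
move=> [hk1 [_ [hk3 hk4]]] HU HC eta0 [hint [_ [hder hID]]] hxs Hint hal hbe hlt.
set v := fun b => pderiv Phi b xs.
set c := v al - v be.
have c0 : 0 < c by rewrite /c /v subr_gt0.
set e := c / 4.
have e0 : 0 < e by rewrite /e; lra.
set V := \sum_b `|v b| + c.
have Vb : forall b, `|v b| + e <= V.
  move=> b; rewrite /V (bigD1 b) //=.
  have : 0 <= \sum_(i | i != b) `|v i| by apply: sumr_ge0.
  rewrite /e; lra.
have V0 : 0 < V by have := Vb al; have := normr_ge0 (v al); lra.
set eps := e / (4 * V).
have eps0 : 0 < eps by rewrite /eps divr_gt0 //; lra.
have eps1 : eps <= 1.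
  rewrite /eps ler_pdivrMr; last lra.
  have := Vb al; have := normr_ge0 (v al); lra.
have V0' : V != 0 by rewrite gt_eqF.
have epsV : 4 * eps * V = e by rewrite /eps; field.
set xa := xs ord0 al.
set xb := xs ord0 be.
have xa0 : 0 < xa by exact: hal.
have xb0 : 0 < xb by exact: hbe.
set k := derive1n 2 theta xa.
have k0 : 0 < k by exact: hk3.
have cv : forall b, {for xs, continuous (pderiv Phi b)}.
  move=> b; have [_ H] := HC 1%N; have [_ H2] := H b; exact: (H2 _ (HU _ hxs)).
have Nv : \forall y \near xs, forall b, `|pderiv Phi b y - v b| < e.
  apply: (@filter_forall _ _ _ (nbhs xs) _) => b. exact: (@cvgr_distC_lt _ _ _ _ _ _ _ (cv b) _ e0).
have [r1 r10 Hr1] := (nbhs_ballP _ _).1 Nv.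
have ct2 : {for xa, continuous (derive1n 2 theta)}.
  apply: differentiable_continuous; apply/derivable1_diffP; exact: hk1.
have ct1 : {for xb, continuous (derive1n 1 theta)}.
  apply: differentiable_continuous; apply/derivable1_diffP; exact: hk1.
have ek0 : 0 < eps * k / 2 by apply: divr_gt0 => //; apply: mulr_gt0.
have N2 : \forall y \near xa, `|derive1n 2 theta y - k| < eps * k / 2.
  exact: (@cvgr_distC_lt _ _ _ _ _ _ _ ct2 _ ek0).
have [r2 r20 Hr2] := (nbhs_ballP _ _).1 N2.
have N1 : \forall y \near xb, `|derive1n 1 theta y - derive1n 1 theta xb| < 1.
  exact: (@cvgr_distC_lt _ _ _ _ _ _ _ ct1 _ ltr01).
have [r3 r30 Hr3] := (nbhs_ballP _ _).1 N1.
set delta := Num.min (Num.min r1 r2) (Num.min r3 1).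
have d0 : 0 < delta by rewrite /delta !lt_min r10 r20 r30 ltr01.
have d1 : delta <= r1 by rewrite /delta !ge_min lexx.
have d2 : delta <= r2 by rewrite /delta !ge_min lexx orbT.
have d3 : delta <= r3 by rewrite /delta !ge_min lexx orbT.
have d4 : delta <= 1 by rewrite /delta !ge_min lexx !orbT.
set M := k * (`|xa| + 1) + 2 * (`|derive1n 1 theta xb| + 1).
set T := 2 * ((eta * M + 1) / e + 2 * M + 1) + 1.
have T0 : 0 < T.
  have M0 : 0 <= M by rewrite /M; apply: addr_ge0; apply: mulr_ge0; rewrite ?ltW //; apply: addr_ge0.
  rewrite /T; have : 0 <= (eta * M + 1) / e by apply: divr_ge0; [nra | lra].
  lra.
have [a [b [a0 [hT hJ]]]] := Hint delta T d0 T0.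
have ab : a < b by lra.

set Xa := fun s => x s ord0 al.
set Xb := fun s => x s ord0 be.
set Y := fun s => k * Xa s - (1 + eps) * derive1n 1 theta (Xb s).
set dY := fun s => k * derive1 Xa s - (1 + eps) * (derive1n 2 theta (Xb s) * derive1 Xb s).
set ddY := fun s => k * derive1 (derive1 Xa) s
   - (1 + eps) * (derive1n 2 theta (Xb s) * derive1 (derive1 Xb) s + derive1 Xb s * (derive1n 3 theta (Xb s) * derive1 Xb s)).
have hth : forall (m : nat) (y : R), 0 < y -> is_derive y 1 (derive1n m theta) (derive1n m.+1 theta y).
  by move=> m y y0; rewrite derive1nS derive1E; apply: derivableP; exact: hk1.
have hXd : forall (g : 'I_n.+1) (t : R), 0 < t -> is_derive t 1 (fun s => x s ord0 g) (derive1 (fun s => x s ord0 g) t).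
  by move=> g t t0; rewrite derive1E; apply: derivableP; exact: (hder g t t0).1.
have hQd : forall (g : 'I_n.+1) (t : R), 0 < t -> is_derive t 1 (derive1 (fun s => x s ord0 g))
     (derive1 (derive1 (fun s => x s ord0 g)) t).
  by move=> g t t0; rewrite [X in is_derive _ _ _ X]derive1E; apply: derivableP; exact: (hder g t t0).2.
have tpos : forall t : R, a < t < b -> 0 < t by move=> t /andP[t1 _]; lra.
have pos : forall (t : R) (g : 'I_n.+1), a < t < b -> 0 < x t ord0 g.
  by move=> t g ht; have [H _] := hint t (ltW (tpos t ht)); exact: H.
have hYd : forall t, a < t < b -> is_derive t 1 Y (dY t).
  move=> t ht; have t0 := tpos t ht.
  have H := is_derive_lin2 k (1 + eps) (hXd al t t0)
     (is_derive_comp' (hth 1%N (Xb t) (pos t be ht)) (hXd be t t0)).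
  exact: H.
have hdYd : forall t, a < t < b -> is_derive t 1 dY (ddY t).
  move=> t ht; have t0 := tpos t ht.
  have H := is_derive_lin2 k (1 + eps) (hQd al t t0)
     (is_derive_prodcomp (hth 2%N (Xb t) (pos t be ht)) (hXd be t t0) (hQd be t t0)).
  exact: H.
have hYM : forall t, a < t < b -> `|Y t| <= M.
  move=> t ht; have hc := hJ t ht.
  have h1 : Xa t <= xa + 1.
    have := hc al; rewrite ltr_norml => /andP[_ u2]; rewrite /Xa /xa; lra.
  have hb3 : ball xb r3 (Xb t).
    rewrite -ball_normE /ball_ /= distrC; exact: lt_le_trans (hc be) d3.
  have h2 : `|derive1n 1 theta (Xb t)| <= `|derive1n 1 theta xb| + 1.
    have u := Hr3 _ hb3; have := lerB_dist (derive1n 1 theta (Xb t)) (derive1n 1 theta xb). 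
    move: u; rewrite /= => u; lra.
  have h3 : `|Y t| <= `|k * Xa t| + `|(1 + eps) * derive1n 1 theta (Xb t)| by exact: ler_normB.
  have h4 : `|k * Xa t| <= k * (xa + 1).
    by rewrite normrM (gtr0_norm k0) (gtr0_norm (pos t al ht)) ler_wpM2l // ltW.
  have h5 : `|(1 + eps) * derive1n 1 theta (Xb t)| <= 2 * (`|derive1n 1 theta xb| + 1).
    rewrite normrM (gtr0_norm (_ : 0 < 1 + eps)); last lra.
    have := normr_ge0 (derive1n 1 theta (Xb t)); nra.
  rewrite /M (gtr0_norm xa0); lra.
have hineq : forall t, a < t < b -> e <= ddY t + eta * dY t.
  move=> t ht; have t0 := tpos t ht; have hc := hJ t ht.
  have hbx : ball xs r1 (x t).
    apply: ballrV => // i; rewrite distrC; exact: lt_le_trans (hc i) d1.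
  have hv := Hr1 _ hbx.
  have hb2 : ball xa r2 (Xa t).
    rewrite -ball_normE /ball_ /= distrC; exact: lt_le_trans (hc al) d2.
  have hA := Hr2 _ hb2.
  have ec : c = 4 * e by rewrite /e; lra.
  have hvV : forall g, `|pderiv Phi g (x t)| <= V.
    move=> g; exact: ar3 (hv g) (Vb g).
  apply: (alg (A := derive1n 2 theta (Xa t)) (a3 := derive1n 3 theta (Xa t)) (B := derive1n 2 theta (Xb t)) (b3 := derive1n 3 theta (Xb t))
    (va := pderiv Phi al (x t)) (vb := pderiv Phi be (x t))
    (S := \sum_b (\sum_c (derive1n 2 theta (x t ord0 c))^-1)^-1 / derive1n 2 theta (x t ord0 b) * pderiv Phi b (x t))
    (K := \sum_b (\sum_c (derive1n 2 theta (x t ord0 c))^-1)^-1 / derive1n 2 theta (x t ord0 b) * derive1n 3 theta (x t ord0 b)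
            * derive1 (fun u => x u ord0 b) t ^+ 2)
    (Qa := derive1 Xa t) (Qb := derive1 Xb t)
    (dQa := derive1 (derive1 Xa) t) (dQb := derive1 (derive1 Xb) t) (V := V)).
  - exact: hk3 (pos t al ht).
  - exact: hk3 (pos t be ht).
  - exact: ltW (hk4 _ (pos t al ht)).
  - exact: ltW (hk4 _ (pos t be ht)).
  - exact: ltW.
  - exact: eps1.
  - exact: ar1 k0 (ltW eps0) eps1 hA.
  - apply: lam_bound => g.
    + exact: hk3 (pos t g ht).
    + exact: ltW (hk4 _ (pos t g ht)).
    + have := hvV g; rewrite ler_norml => /andP[]; done.
  - exact: hvV.
  - exact: hvV.
  - have ec' : v al - v be = 4 * e by exact: ec.
    exact: ar2 ec' (hv al) (hv be).
  - by rewrite epsV.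
  - exact: (hID al t t0).
  - exact: (hID be t t0).
have hT' : 2 * ((eta * M + 1) / e + 2 * M + 1) + 1 <= b - a by exact: hT.
have := @growth _ Y dY ddY a b eta e M e0 eta0 ab hYM hYd hdYd hineq.
lra.
Qed.

Theorem proposition4p1 (R : realType) (n : nat) (theta : R -> R)
  (Phi : 'rV[R]_n.+1 -> R) (U : set 'rV[R]_n.+1) (eta : R)
  (x : R -> 'rV[R]_n.+1) (xs : 'rV[R]_n.+1) :
  (1 <= n)%N ->
  is_kernel theta ->
  open U -> (forall y, simplex y -> U y) ->
  Cinf_on U Phi -> Lipschitz_on U Phi ->
  0 <= eta ->
  ID_solution theta Phi eta x ->
  simplex xs ->
  (forall delta T : R, 0 < delta -> 0 < T ->
     exists a b : R, 0 <= a /\ T <= b - a /\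
       forall t, a < t < b -> forall al, `|x t ord0 al - xs ord0 al| < delta) ->
  forall al be, supp_pt xs al -> supp_pt xs be -> pderiv Phi al xs = pderiv Phi be xs.
Proof.
move=> _ hk _ HU HC _ eta0 hsol hxs hint al be hal hbe.
apply/eqP; rewrite eq_le; apply/andP; split; rewrite leNgt; apply/negP => hlt.
- exact: (@main_lt R n theta Phi U eta x xs al be hk HU HC eta0 hsol hxs hint hal hbe hlt).
- exact: (@main_lt R n theta Phi U eta x xs be al hk HU HC eta0 hsol hxs hint hbe hal hlt).
Qed.
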